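(* Let $(I^*_{g^*},g^* )$ be a Stackelberg equilibrium and let $\pi^*_{g^*}=\Pi_{g^*}(I^*_{g^*}(X))$. Then the induced contract $(I^*_{g^*},\pi^*_{g^*})$ is individually rational and Pareto optimal, and moreover $\rho^{Pol}(I^*_{g^*},\pi^*_{g^*})=\rho^{Pol}(0,0)$.
   Context: $(\Omega,\mathcal F,\mathbb P)$ is a non-atomic probability space; $X\ge0$ is bounded with range $[0,M]$ and strictly increasing distribution function $F_X$. A distortion function is a non-decreasing differentiable map $h:[0,1]\to[0,1]$ with $h(0)=0$, $h(1)=1$; $\int Y\,\mathrm dh\circ\mathbb P=\int_0^\infty h(\mathbb P(Y\ge y))\mathrm dy+\int_{-\infty}^0[h(\mathbb P(Y\ge y))-1]\mathrm dy$. Policyholder distortion $T$, $\rho^{Pol}(Z)=\int Z\,\mathrm dT\circ\mathbb P$; pricing distortion $g$, $\Pi_g(I(X))=\int I(X)\,\mathrm dg\circ\mathbb P$. $\mathcal I_L=\{I:[0,M]\to[0,M]: I(0)=0,\ 0\le I(x_1)-I(x_2)\le x_1-x_2\ \forall x_2\le x_1\}$; for a mechanism, $\rho^{Pol}(I,g)=\rho^{Pol}(X-I(X)+\Pi_g(I(X)))$ and $V^{In}(I,g)=\Pi_g(I(X))-\mathbb E[I(X)]$. $(I^*,g^* )$ is a Stackelberg equilibrium if (i) $I^*\in\arg\min_{I\in\mathcal I_L}\rho^{Pol}(I,g^* )$ and (ii) $V^{In}(I^*,g^* )\ge V^{In}(I,g)$ for all $(I,g)$ with $I\in\arg\min_{\bar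 I\in\mathcal I_L}\rho^{Pol}(\bar I,g)$. For a contract $(I,\pi)\in\mathcal I_L\times\mathbb R$: $\rho^{Pol}(I,\pi)=\rho^{Pol}(X-I(X)+\pi)$, $V^{In}(I,\pi)=\pi-\mathbb E[I(X)]$. A contract $(I^*,\pi^* )$ is individually rational if $\rho^{Pol}(I^*,\pi^* )\le\rho^{Pol}(0,0)$ and $V^{In}(I^*,\pi^* )\ge V^{In}(0,0)$; it is Pareto optimal if no $(I,\pi)$ has $\rho^{Pol}(I,\pi)\le\rho^{Pol}(I^*,\pi^* )$ and $V^{In}(I,\pi)\ge V^{In}(I^*,\pi^* )$ with at least one strict inequality. *)

(* Defs.v *)
From HB Require Import structures.
From mathcomp Require Import all_boot all_order all_algebra.
From mathcomp Require Import all_classical all_reals all_analysis.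
Set Implicit Arguments. Unset Strict Implicit. Unset Printing Implicit Defensive.
Import Order.TTheory GRing.Theory Num.Theory.
Import numFieldNormedType.Exports.
Local Open Scope classical_set_scope.
Local Open Scope ring_scope.

Section Defs.
Context {R : realType} {d : measure_display} {Om : measurableType d}.
Variable P : probability Om R.

Definition nonatomic : Prop :=
  forall A, measurable A -> (0 < P A)%E ->
    exists B, [/\ measurable B, B `<=` A, (0 < P B)%E & (P B < P A)%E].

Definition distortion (h : R -> R) : Prop :=
  [/\ (forall x, 0 <= x <= 1 -> 0 <= h x <= 1),
      (forall x y, 0 <= x -> x <= y -> y <= 1 -> h x <= h y),
      h 0 = 0, h 1 = 1 &
      [/\ (forall x, 0 < x < 1 -> derivable h x 1),
           cvg ((fun t => (h t - h 0) / t) @ 0^'+) &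
           cvg ((fun t => (h t - h 1) / (t - 1)) @ 1^'-)]].

(* Choquet integral  int Y d(h o P)
   = int_0^oo h(P(Y>=y)) dy + int_{-oo}^0 [h(P(Y>=y)) - 1] dy
   (real-valued; all random variables considered below are bounded) *)
Definition choquet (h : R -> R) (Y : Om -> R) : R :=
  fine ((\int[lebesgue_measure]_(y in `[0%R, +oo[)
            (h (fine (P [set w | y <= Y w])))%:E) +
        (\int[lebesgue_measure]_(y in `]-oo, 0%R[)
            (h (fine (P [set w | y <= Y w])) - 1)%:E))%E.

Definition expect (Y : Om -> R) : R := fine (\int[P]_w (Y w)%:E).

Variables (X : Om -> R) (M : R) (T : R -> R).

Definition IL (I : R -> R) : Prop :=
  [/\ (forall x, 0 <= x <= M -> 0 <= I x <= M),
      I 0 = 0 &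
      (forall x1 x2, 0 <= x2 -> x2 <= x1 -> x1 <= M ->
          0 <= I x1 - I x2 <= x1 - x2)].

Definition rhoPol (Z : Om -> R) : R := choquet T Z.
Definition Pi (g : R -> R) (I : R -> R) : R := choquet g (fun w => I (X w)).

Definition rho_mech (I g : R -> R) : R :=
  rhoPol (fun w => X w - I (X w) + Pi g I).
Definition V_mech (I g : R -> R) : R := Pi g I - expect (fun w => I (X w)).

Definition is_best_response (I g : R -> R) : Prop :=
  IL I /\ forall J, IL J -> rho_mech I g <= rho_mech J g.

Definition stackelberg (Is gs : R -> R) : Prop :=
  [/\ distortion gs, is_best_response Is gs &
      forall I g, distortion g -> is_best_response I g ->
        V_mech I g <= V_mech Is gs].

Definition rho_con (I : R -> R) (pi : R) : R :=
  rhoPol (fun w => X w - I (X w) + pi).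
Definition V_con (I : R -> R) (pi : R) : R := pi - expect (fun w => I (X w)).

Definition individually_rational (I : R -> R) (pi : R) : Prop :=
  rho_con I pi <= rho_con (fun _ => 0) 0 /\ V_con I pi >= V_con (fun _ => 0) 0.

Definition pareto_optimal (I : R -> R) (pi : R) : Prop :=
  ~ exists J pj, [/\ IL J, rho_con J pj <= rho_con I pi,
                    V_con J pj >= V_con I pi &
                    rho_con J pj < rho_con I pi \/ V_con J pj > V_con I pi].
End Defs.

(* Main.v *)
Require Import Defs.
From HB Require Import structures.
From mathcomp Require Import all_boot all_order all_algebra.
From mathcomp Require Import all_classical all_reals all_analysis measurable_realfun.
From mathcomp Require Import ring lra.
Import Order.TTheory GRing.Theory Num.Theory.
Import numFieldNormedType.Exports.
Local Open Scope classical_set_scope.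
Local Open Scope ring_scope.

Section Choq.
Context {R : realType} {d : measure_display} {Om : measurableType d}.
Variable P : probability Om R.

Definition surv (Z : Om -> R) (y : R) := fine (P [set w | y <= Z w]).

Lemma Pfine01 A : measurable A -> 0 <= fine (P A) <= 1.
Proof.
move=> mA; have h1 := probability_le1 P mA; have h0 := measure_ge0 P A.
have fA : P A \is a fin_num by rewrite ge0_fin_numE // (le_lt_trans h1) // ltry.
by rewrite fine_ge0 //= -lee_fin fineK.
Qed.

Lemma Pfine_le A B : measurable A -> measurable B -> A `<=` B ->
  fine (P A) <= fine (P B).
Proof.
move=> mA mB AB.
have fA : P A \is a fin_num.
  by rewrite ge0_fin_numE // (le_lt_trans (probability_le1 P mA)) // ltry.
have fB : P B \is a fin_num.
  by rewrite ge0_fin_numE // (le_lt_trans (probability_le1 P mB)) // ltry.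
by rewrite -lee_fin !fineK //; apply: le_measure => //; rewrite inE.
Qed.

Lemma Pfine_T : fine (P setT) = 1.
Proof. by rewrite probability_setT. Qed.

Lemma Pfine_0 : fine (P set0) = 0.
Proof. by rewrite measure0. Qed.

Lemma meas_ge (Z : Om -> R) y : measurable_fun setT Z ->
  measurable [set w | y <= Z w].
Proof.
move=> mZ.
have -> : [set w | y <= Z w] = setT `&` Z @^-1` `[y, +oo[%classic.
  by apply/seteqP; split => w /=; rewrite in_itv /= andbT //; case.
exact: mZ measurableT _ (measurable_itv _).
Qed.


Lemma bnd_int (D : set R) (f : R -> R) (K : R) : measurable D ->
  (lebesgue_measure D < +oo)%E -> measurable_fun D f ->
  (forall x, D x -> `|f x| <= K) -> lebesgue_measure.-integrable D (EFin \o f).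
Proof.
move=> mD Dfin mf fK; apply: measurable_bounded_integrable => //.
exists K; split; first exact: num_real.
move=> M KM x Dx /=; exact: (le_trans (fK x Dx) (ltW KM)).
Qed.

Variable h : R -> R.
Hypothesis h01 : forall x, 0 <= x <= 1 -> 0 <= h x <= 1.
Hypothesis hmono : forall x y, 0 <= x -> x <= y -> y <= 1 -> h x <= h y.
Hypothesis h0 : h 0 = 0.
Hypothesis h1 : h 1 = 1.

Definition phi (Z : Om -> R) y := h (surv Z y).

Lemma phi01 Z y : measurable_fun setT Z -> 0 <= phi Z y <= 1.
Proof. by move=> mZ; apply: h01; apply: Pfine01; exact: meas_ge. Qed.

Lemma phi_ni Z y y' : measurable_fun setT Z -> y <= y' -> phi Z y' <= phi Z y.
Proof.
move=> mZ yy; rewrite /phi /surv.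
have /andP[a _] := Pfine01 _ (meas_ge Z y' mZ).
have /andP[_ b] := Pfine01 _ (meas_ge Z y mZ).
apply: hmono => //; apply: Pfine_le; try exact: meas_ge.
by move=> w /= /(le_trans yy).
Qed.

Lemma mphi Z D : measurable_fun setT Z -> measurable D -> measurable_fun D (phi Z).
Proof.
move=> mZ mD; apply: nonincreasing_measurable => // y y' yy.
exact: phi_ni.
Qed.

Lemma phi_int Z D : measurable_fun setT Z -> measurable D ->
  (lebesgue_measure D < +oo)%E ->
  lebesgue_measure.-integrable D (EFin \o phi Z).
Proof.
move=> mZ mD Dfin; apply: (@bnd_int _ _ 1) => //; first exact: mphi.
by move=> x _; have /andP[a b] := phi01 Z x mZ; rewrite ger0_norm.
Qed.


Lemma window (Z : Om -> R) (L : R) : measurable_fun setT Z -> 0 <= L -> (forall w, -L <= Z w <= L) ->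
  choquet P h Z =
  fine (\int[lebesgue_measure]_(y in `[(- L)%R, L%R]) (phi Z y)%:E)%E - L.
Proof.
move=> mZ L0 ZL; rewrite /choquet.
change (fine ((\int[lebesgue_measure]_(y in `[0%R, +oo[) (phi Z y)%:E) +
  (\int[lebesgue_measure]_(y in `]-oo, 0%R[) (phi Z y - 1)%:E))%E =
  fine (\int[lebesgue_measure]_(y in `[(- L)%R, L%R]) (phi Z y)%:E)%E - L).
have mp D : measurable D -> measurable_fun D (fun y => (phi Z y)%:E).
  by move=> mD; apply/measurable_EFinP; exact: mphi.
have eA : (\int[lebesgue_measure]_(y in `[0%R, +oo[) (phi Z y)%:E =
   \int[lebesgue_measure]_(y in `[0%R, L%R]) (phi Z y)%:E)%E.
  rewrite (@itv_bndbnd_setU _ _ (BLeft 0) (BRight L) (BInfty _ false)); try (by rewrite bnd_simp).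
  rewrite integral_setU //; last 2 first.
  - by apply: mp; apply: measurableU.
  - rewrite /disj_set; apply/eqP/seteqP; split => x //=.
    by rewrite !in_itv /= => -[/andP[_ a] b]; lra.
  rewrite [X in (_ + X)%E](_ : _ = 0%E) ?adde0 //.
  rewrite -(integral0 lebesgue_measure `]L%R, +oo[%classic).
  apply: eq_integral => y; rewrite inE /= in_itv /= andbT => Ly.
  rewrite /phi /surv (_ : [set w | y <= Z w] = set0) ?measure0 /= ?h0 //.
  apply/seteqP; split => w //= yw; have := ZL w; lra.
have eB : (\int[lebesgue_measure]_(y in `]-oo, 0%R[) (phi Z y - 1)%:E =
   \int[lebesgue_measure]_(y in `[(- L)%R, 0%R[) (phi Z y)%:E - L%:E)%E.
  rewrite (@itv_bndbnd_setU _ _ (BInfty _ true) (BLeft (- L)) (BLeft 0)); try (by rewrite bnd_simp); try (by rewrite bnd_simp; lra).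
  rewrite integral_setU //; last 2 first.
  - apply/measurable_EFinP; apply: measurable_funB => //.
    by apply: mphi => //; apply: measurableU.
  - rewrite /disj_set; apply/eqP/seteqP; split => x //=.
    by rewrite !in_itv /= => -[a /andP[b _]]; lra.
  rewrite [X in (X + _)%E](_ : _ = 0%E) ?add0e; last first.
    rewrite -(integral0 lebesgue_measure `]-oo, (- L)%R[%classic).
    apply: eq_integral => y; rewrite inE /= in_itv /= => Ly.
    rewrite /phi /surv (_ : [set w | y <= Z w] = setT) ?probability_setT /= ?h1 ?subrr //.
    apply/seteqP; split => w //= _; have := ZL w; lra.
  rewrite (_ : (fun y => (phi Z y - 1)%:E) = (fun y => (phi Z y)%:E - (cst 1 y)%:E)%E);
    last by apply/funext => y; rewrite EFinB.
  rewrite integralB_EFin //; last 2 first.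
  - apply: phi_int => //; rewrite lebesgue_measure_itv /=.
    by case: ifP => _; rewrite ?ltry.
  - apply: (@bnd_int _ _ 1) => //.
    + by rewrite lebesgue_measure_itv /=; case: ifP => _; rewrite ?ltry.
    + by move=> x _; rewrite /= normr1.
  congr (_ - _)%E.
  transitivity (\int[lebesgue_measure]_(x in `[(- L)%R, 0%R[) (cst 1%E) x)%E.
    by apply: eq_integral.
  rewrite integral_cst //= lebesgue_measure_itv /= lte_fin.
  have [L0'|] := ltP (- L) 0.
    by rewrite mul1e add0e opprK.
  move=> LL; have -> : L = 0 by lra.
  by rewrite mul1e.
rewrite eA eB.
rewrite (@itv_bndbnd_setU _ _ (BLeft (- L)) (BLeft 0) (BRight L)); try (by rewrite bnd_simp; lra).
rewrite integral_setU //; last 2 first.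
- by apply: mp; apply: measurableU.
- rewrite /disj_set; apply/eqP/seteqP; split => x //=.
  by rewrite !in_itv /= => -[/andP[_ a] /andP[b _]]; lra.
have fi (a b : itv_bound R) : (\int[lebesgue_measure]_(y in [set` Interval a b]) (phi Z y)%:E)%E \is a fin_num ->
  (\int[lebesgue_measure]_(y in [set` Interval a b]) (phi Z y)%:E)%E =
  (fine (\int[lebesgue_measure]_(y in [set` Interval a b]) (phi Z y)%:E))%:E.
  by move=> ?; rewrite fineK.
have fa : (\int[lebesgue_measure]_(y in `[0%R, L%R]) (phi Z y)%:E)%E \is a fin_num.
  apply: integrable_fin_num => //; apply: phi_int => //.
  by rewrite lebesgue_measure_itv /=; case: ifP => _; rewrite ?ltry.
have fb : (\int[lebesgue_measure]_(y in `[(- L)%R, 0%R[) (phi Z y)%:E)%E \is a fin_num.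
  apply: integrable_fin_num => //; apply: phi_int => //.
  by rewrite lebesgue_measure_itv /=; case: ifP => _; rewrite ?ltry.
rewrite (fi _ _ fa) (fi _ _ fb) -EFinB -!EFinD /=; lra.
Qed.


Lemma indic_eq (T T' : Type) (A : set T) (B : set T') x x' : (A x <-> B x') -> (\1_A x : R) = \1_B x'.
Proof.
move=> AB; rewrite /indic.
have -> : (x \in A) = (x' \in B).
  by apply/idP/idP => /set_mem/AB ?; apply/mem_set.
by [].
Qed.

Definition S (Z : Om -> R) (L u : R) := [set y : R | (- L <= y <= L) /\ u < phi Z y].

Lemma mS (Z : Om -> R) L u : measurable_fun setT Z -> measurable (S Z L u).
Proof.
move=> mZ.
have -> : S Z L u = `[(- L)%R, L%R] `&` (setT `&` phi Z @^-1` `]u, +oo[).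
  apply/seteqP; split => y; rewrite /S /= !in_itv /= ?andbT.
    by move=> [a b].
  by move=> [a [_ b]].
apply: measurableI; first exact: measurable_itv.
exact: (mphi Z setT mZ measurableT) measurableT _ (measurable_itv _).
Qed.

Lemma layer (Z : Om -> R) (L : R) : measurable_fun setT Z -> 0 <= L ->
  (\int[lebesgue_measure]_(y in `[(- L)%R, L%R]) (phi Z y)%:E =
   \int[lebesgue_measure]_(u in `[0%R, 1%R[) lebesgue_measure (S Z L u))%E.
Proof.
move=> mZ L0.
pose E := [set p : R * R | (- L <= p.1 <= L) /\ (0 <= p.2 < 1) /\ p.2 < phi Z p.1].
have mE : measurable E.
  pose g := fun p : R * R => phi Z p.1 - p.2.
  have mg : measurable_fun setT g.
    apply: measurable_funB; last exact: measurable_snd.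
    apply: measurableT_comp; last exact: measurable_fst.
    exact: mphi.
  have -> : E = (`[(- L)%R, L%R] `*` `[0%R, 1%R[) `&` (setT `&` g @^-1` `]0%R, +oo[).
    apply/seteqP; split => -[y u]; rewrite /E /g /= !in_itv /= ?andbT.
      by move=> [a [b c]]; split; [by split | split => //; lra].
    by move=> [[a b] [_ c]]; split => //; split => //; lra.
  apply: measurableI; first by apply: measurableX; exact: measurable_itv.
  exact: mg measurableT _ (measurable_itv _).
pose f := fun p : R * R => ((\1_E p : R)%:E).
have mf : measurable_fun setT f.
  by apply/measurable_EFinP; exact: measurable_indic.
have f0 p : (0 <= f p)%E by rewrite /f lee_fin.
have FT := fubini_tonelli (m1 := lebesgue_measure) (m2 := lebesgue_measure) f mf f0.
transitivity (\int[lebesgue_measure]_x \int[lebesgue_measure]_y f (x, y))%E.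
  rewrite integral_mkcond; apply: eq_integral => y _; rewrite patchE.
  case: ifPn => yL.
    transitivity (\int[lebesgue_measure]_u ((\1_(`[0%R, phi Z y[) u : R)%:E))%E.
      rewrite integral_indic; [|exact: measurableT|exact: measurable_itv].
      rewrite setIT; symmetry.
      etransitivity; first exact: (@lebesgue_measure_itv R `[0%R, phi Z y[).
      rewrite /= lte_fin.
      have /andP[p0 p1] := phi01 Z y mZ.
      case: ifPn => py; first by rewrite sube0.
      by have -> : phi Z y = 0 by lra.
    apply: eq_integral => u _; rewrite /f; congr EFin; apply: indic_eq.
    have yL' : - L <= y <= L by move: yL; rewrite inE /= in_itv.
    have /andP[p0 p1] := phi01 Z y mZ.
    rewrite /E /=.
    rewrite in_itv; split.
    - move=> /andP[a b]; split; first exact: yL'; split; last exact: b.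
      by apply/andP; split; [exact: a|exact: lt_le_trans b p1].
    - move=> [_ [/andP[a _] c]]; apply/andP; split; [exact: a|exact: c].
  rewrite (@eq_integral _ _ _ _ _ (cst 0%E)); first by rewrite integral0.
  move=> u _; rewrite /f /indic.
  have -> : ((y, u) \in E) = false.
    apply/negbTE/negP => /set_mem [yL' _].
    by apply: (negP yL); rewrite inE /= in_itv; exact: yL'.
  by [].
rewrite FT.
rewrite [RHS]integral_mkcond; apply: eq_integral => u _; rewrite patchE.
case: ifPn => uI.
  transitivity (\int[lebesgue_measure]_y ((\1_(S Z L u) y : R)%:E))%E.
    apply: eq_integral => y _; rewrite /f; congr EFin; apply: indic_eq.
    have uI' : 0 <= u < 1 by move: uI; rewrite inE /= in_itv.
    rewrite /E /S; split.
    - by move=> [a [_ c]]; split; [exact: a|exact: c].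
    - by move=> [a c]; split; [exact: a|split; [exact: uI'|exact: c]].
  rewrite integral_indic; [|exact: measurableT|exact: mS].
  by rewrite setIT.
rewrite (@eq_integral _ _ _ _ _ (cst 0%E)); first by rewrite integral0.
move=> y _; rewrite /f /indic.
have -> : ((y, u) \in E) = false.
  apply/negbTE/negP => /set_mem [_ [uI' _]].
  by apply: (negP uI); rewrite inE /= in_itv; exact: uI'.
by [].
Qed.


Variables (X : Om -> R) (M : R).
Hypothesis mX : measurable_fun setT X.
Hypothesis X0M : forall w, 0 <= X w <= M.
Hypothesis M0 : 0 <= M.

Definition Dset u := [set x : R | 0 <= x <= M /\ u < phi X x].
Definition bb u := sup (Dset u).

Lemma phiX0 : phi X 0 = 1.
Proof.
rewrite /phi /surv (_ : [set w | 0 <= X w] = setT) ?probability_setT //.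
by apply/seteqP; split => w // _; have /andP[] := X0M w.
Qed.

Lemma hasD {u} : u < 1 -> has_sup (Dset u).
Proof.
move=> u1; split; first by exists 0; split; [rewrite lexx M0|rewrite phiX0].
by exists M => x [/andP[_ ?] _].
Qed.

Lemma bb_range {u} : u < 1 -> 0 <= bb u <= M.
Proof.
move=> u1; have [ne ub] := hasD u1; apply/andP; split.
  by apply: ub_le_sup => //; split; [rewrite lexx M0|rewrite phiX0].
by apply: ge_sup => // x [/andP[_ ?] _].
Qed.

Lemma bb_ni u u' : 0 <= u -> u <= u' -> u' < 1 -> bb u' <= bb u.
Proof.
move=> u0 uu u1; have u1' : u < 1 by apply: le_lt_trans u1.
apply: ge_sup; first by have [] := hasD u1.
move=> x [xM ux]; apply: ub_le_sup; first by have [] := hasD u1'.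
by split => //; apply: le_lt_trans ux.
Qed.

Lemma leb_cc (a b : R) : a <= b -> lebesgue_measure `[a, b] = (b - a)%:E.
Proof.
move=> ab; etransitivity; first exact: (@lebesgue_measure_itv R `[a, b]).
rewrite /= lte_fin; case: ifPn => [_|]; first by rewrite EFinB.
move=> ba; have -> : b = a by move: ba; rewrite -leNgt => ba; lra.
by rewrite subrr.
Qed.

Lemma leb_cc_oo (a b : R) : a <= b ->
  lebesgue_measure `]a, b[ = lebesgue_measure `[a, b].
Proof.
move=> ab; rewrite leb_cc //.
etransitivity; first exact: (@lebesgue_measure_itv R `]a, b[).
rewrite /= lte_fin; case: ifPn => [_|]; first by rewrite EFinB.
move=> ba; have -> : b = a by move: ba; rewrite -leNgt => ba; lra.
by rewrite subrr.
Qed.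

Section Psi.
Variable psi : R -> R.
Hypothesis Hpsi : forall x1 x2, 0 <= x2 -> x2 <= x1 -> x1 <= M ->
  0 <= psi x1 - psi x2 <= x1 - x2.

Definition Zp := fun w => psi (X w).

Lemma mZp : measurable_fun setT Zp.
Proof.
pose c := fun x : R => psi (Num.min (Num.max x 0) M).
have cX : Zp = c \o X.
  apply/funext => w; rewrite /Zp /c /=; have /andP[a b] := X0M w.
  by rewrite (@max_l _ _ (X w) 0) // (@min_l _ _ (X w) M).
rewrite cX; apply: measurableT_comp => //.
apply: nondecreasing_measurable => // x y xy; rewrite /c.
have H1 z : 0 <= Num.min (Num.max z 0) M <= M.
  by rewrite le_min M0 le_max lexx orbT /= ge_min lexx orbT.
have := H1 x; have := H1 y; move=> /andP[a b] /andP[a' b'].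
have : Num.min (Num.max x 0) M <= Num.min (Num.max y 0) M.
  by apply: le_min2 => //; apply: le_max2.
by move=> le; have /andP[H _] := Hpsi _ _ a' le b; rewrite -subr_ge0.
Qed.


Lemma psi_mono {x y} : 0 <= x -> x <= y -> y <= M -> psi x <= psi y.
Proof. by move=> a b c; have /andP[H _] := Hpsi _ _ a b c; rewrite -subr_ge0. Qed.

Lemma psi_lip {x y} : 0 <= x -> x <= y -> y <= M -> psi y - psi x <= y - x.
Proof. by move=> a b c; have /andP[_ H] := Hpsi _ _ a b c. Qed.

Lemma S_lower L u y : 0 <= u < 1 -> psi M <= L -> - L < y < psi (bb u) ->
  S Zp L u y.
Proof.
move=> /andP[u0 u1] pL /andP[Ly yb].
have /andP[b0 bM] := bb_range u1.
have pbM := psi_mono b0 bM (lexx M).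
split; first by apply/andP; split; lra.
have [y0|y0] := leP y (psi 0).
  rewrite /phi /surv (_ : [set w | y <= Zp w] = setT) ?probability_setT /= ?h1 //.
  apply/seteqP; split => w // _ /=; have /andP[a b] := X0M w.
  exact: le_trans y0 (psi_mono (lexx 0) a b).
pose del := psi (bb u) - y.
have dpos : 0 < del by rewrite /del; lra.
have db : del <= bb u.
  have := psi_lip (lexx 0) b0 bM; rewrite /del; lra.
have [x' [/andP[x'0 x'M] ux'] bx'] := sup_adherent (eps := del / 2)
  ltac:(lra) (hasD u1).
pose x := bb u - del / 2.
have x0 : 0 <= x by rewrite /x; lra.
have xb : x <= bb u by rewrite /x; lra.
have xx' : x <= x' by rewrite /x; move: bx'; rewrite /bb; lra.
have phix : u < phi X x := lt_le_trans ux' (phi_ni X x x' mX xx').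
have psix : y < psi x.
  have := psi_lip x0 xb bM; rewrite /x /del; lra.
apply: (lt_le_trans phix); rewrite /phi.
have /andP[s1 s2] := Pfine01 _ (meas_ge X x mX).
have /andP[s3 s4] := Pfine01 _ (meas_ge Zp y mZp).
apply: hmono => //; apply: Pfine_le; try exact: (meas_ge _ _ mX); try exact: (meas_ge _ _ mZp).
move=> w /= xw; have /andP[a b] := X0M w.
exact: le_trans (ltW psix) (psi_mono x0 xw b).
Qed.

Lemma S_upper L u y : 0 <= u < 1 -> S Zp L u y -> y <= psi (bb u).
Proof.
move=> /andP[u0 u1] [_ uy].
have /andP[b0 bM] := bb_range u1.
rewrite leNgt; apply/negP => by_.
pose x := bb u + (y - psi (bb u)).
have bx : bb u < x by rewrite /x; lra.
have phix : phi X x <= u.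
  have [xM|xM] := leP x M.
    rewrite leNgt; apply/negP => ux.
    have : x <= bb u.
      apply: ub_le_sup; first by have [] := hasD u1.
      by split => //; apply/andP; split; lra.
    lra.
  rewrite /phi /surv (_ : [set w | x <= X w] = set0) ?measure0 /= ?h0 //.
  apply/seteqP; split => w //= xw; have /andP[_ b] := X0M w; lra.
have : phi Zp y <= phi X x.
  rewrite /phi.
  have /andP[s1 s2] := Pfine01 _ (meas_ge X x mX).
  have /andP[s3 s4] := Pfine01 _ (meas_ge Zp y mZp).
  apply: hmono => //; apply: Pfine_le; try exact: (meas_ge _ _ mX); try exact: (meas_ge _ _ mZp).
  move=> w /= yw; rewrite leNgt; apply/negP => Xx.
  have /andP[a b] := X0M w.
  have [Xb|Xb] := leP (X w) (bb u).
    have := psi_mono a Xb bM; rewrite /Zp in yw; lra.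
  have := psi_lip b0 (ltW Xb) b; rewrite /Zp in yw; rewrite /x in Xx; lra.
lra.
Qed.


Lemma leb_S L u : 0 <= u < 1 -> - L <= psi 0 -> psi M <= L ->
  lebesgue_measure (S Zp L u) = (psi (bb u) + L)%:E.
Proof.
move=> uI L0 LM; have /andP[u0 u1] := uI.
have /andP[b0 bM] := bb_range u1.
have pb : - L <= psi (bb u) := le_trans L0 (psi_mono (lexx 0) b0 bM).
have -> : (psi (bb u) + L)%:E = lebesgue_measure `[(- L)%R, psi (bb u)].
  by rewrite leb_cc // opprK.
apply/le_anti/andP; split.
  apply: le_measure; rewrite ?inE; [exact: mS mZp|exact: measurable_itv|].
  move=> y Sy; rewrite /= in_itv; apply/andP; split.
    by have [/andP[]] := Sy.
  exact: S_upper uI Sy.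
rewrite -leb_cc_oo //.
apply: le_measure; rewrite ?inE; [exact: measurable_itv|exact: mS mZp|].
move=> y; rewrite /= in_itv => /andP[a b].
by apply: S_lower => //; apply/andP; split.
Qed.


Lemma mpsib : measurable_fun (`[0%R, 1%R[ : set R) (fun u : R => psi (bb u)).
Proof.
pose g := fun u : R => if u < 1 then psi (bb (Num.max u 0)) else psi 0.
apply: (@eq_measurable_fun _ _ _ _ _ g).
  move=> u; rewrite inE /= in_itv /= => /andP[u0 u1].
  by rewrite /g u1 (@max_l _ _ u 0).
apply: nonincreasing_measurable; first exact: measurable_itv.
move=> u u' uu; rewrite /g.
have mx0 (v : R) : 0 <= Num.max v 0 by rewrite le_max lexx orbT.
case: (ltP u' 1) => u'1.
  have u1 : u < 1 by apply: le_lt_trans u'1.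
  rewrite u1.
  have mu'1 : Num.max u' 0 < 1 by rewrite gt_max u'1 ltr01.
  have mu1 : Num.max u 0 < 1 by rewrite gt_max u1 ltr01.
  have /andP[b0 bM] := bb_range mu1.
  have /andP[b0' bM'] := bb_range mu'1.
  apply: psi_mono => //; apply: bb_ni => //.
  exact: le_max2.
case: (ltP u 1) => u1 //.
have mu1 : Num.max u 0 < 1 by rewrite gt_max u1 ltr01.
have /andP[b0 bM] := bb_range mu1.
exact: psi_mono (lexx 0) b0 bM.
Qed.

Lemma rep : choquet P h Zp = \int[lebesgue_measure]_(u in `[0%R, 1%R[) psi (bb u).
Proof.
pose L := `|psi 0| + `|psi M|.
have L0 : 0 <= L by rewrite /L addr_ge0.
have L1 : - L <= psi 0.
  have := ler_norm (- psi 0); rewrite normrN /L; have := normr_ge0 (psi M); lra.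
have L2 : psi M <= L.
  have := ler_norm (psi M); rewrite /L; have := normr_ge0 (psi 0); lra.
have ZL w : - L <= Zp w <= L.
  have /andP[a b] := X0M w; rewrite /Zp.
  have := psi_mono (lexx 0) a b; have := psi_mono a b (lexx M).
  by move=> p1 p2; apply/andP; split; lra.
rewrite (window Zp L mZp L0 ZL) (layer Zp L mZp L0).
have -> : (\int[lebesgue_measure]_(u in `[0%R, 1%R[) lebesgue_measure (S Zp L u))%E =
  (\int[lebesgue_measure]_(u in `[0%R, 1%R[) (psi (bb u) + L)%:E)%E.
  apply: eq_integral => u; rewrite inE /= in_itv /= => uI; exact: leb_S.
change (\int[lebesgue_measure]_(u in `[0%R, 1%R[) (psi (bb u) + L) - L =
  \int[lebesgue_measure]_(u in `[0%R, 1%R[) psi (bb u)).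
have fin01 : (lebesgue_measure (`[0%R, 1%R[ : set R) < +oo)%E.
  by rewrite lebesgue_measure_itv /=; case: ifP => _; rewrite ?ltry.
rewrite RintegralD; [|exact: measurable_itv| |]; last first.
- apply: (@bnd_int _ _ L) => //.
  by move=> x _; rewrite ger0_norm.
- apply: (@bnd_int _ _ L) => //; first exact: mpsib.
  move=> u; rewrite /= in_itv /= => /andP[u0 u1].
  have /andP[b0 bM] := bb_range u1.
  have := psi_mono (lexx 0) b0 bM; have := psi_mono b0 bM (lexx M).
  by move=> p1 p2; rewrite ler_norml; apply/andP; split; lra.
rewrite Rintegral_cst; last exact: measurable_itv.
have -> : fine (lebesgue_measure (`[0%R, 1%R[ : set R)) = 1.
  by rewrite lebesgue_measure_itv /= lte01 /= subr0.
by rewrite mulr1 addrK.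
Qed.

Lemma psib_bound u : 0 <= u < 1 -> `|psi (bb u)| <= `|psi 0| + `|psi M|.
Proof.
move=> /andP[u0 u1]; have /andP[b0 bM] := bb_range u1.
have := psi_mono (lexx 0) b0 bM; have := psi_mono b0 bM (lexx M).
have := ler_norm (- psi 0); rewrite normrN.
have := ler_norm (psi M); have := normr_ge0 (psi M); have := normr_ge0 (psi 0).
by move=> *; rewrite ler_norml; apply/andP; split; lra.
Qed.

End Psi.

Lemma addA (J : R -> R) (c : R) : IL M J ->
  choquet P h (fun w => X w - J (X w) + c) =
  choquet P h X - choquet P h (fun w => J (X w)) + c.
Proof.
move=> [_ _ HJ].
have H1 : forall x1 x2, 0 <= x2 -> x2 <= x1 -> x1 <= M ->
    0 <= (fun x => x) x1 - (fun x => x) x2 <= x1 - x2.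
  by move=> x1 x2 a b _; rewrite lexx subr_ge0 b.
have H3 : forall x1 x2, 0 <= x2 -> x2 <= x1 -> x1 <= M ->
    0 <= (fun x => x - J x + c) x1 - (fun x => x - J x + c) x2 <= x1 - x2.
  move=> x1 x2 a b e; have /andP[p q] := HJ x1 x2 a b e.
  by apply/andP; split; lra.
have e1 : choquet P h X = \int[lebesgue_measure]_(u in `[0%R, 1%R[) bb u :=
  rep (fun x => x) H1.
have e2 : choquet P h (fun w => J (X w)) =
  \int[lebesgue_measure]_(u in `[0%R, 1%R[) J (bb u) := rep J HJ.
have e3 : choquet P h (fun w => X w - J (X w) + c) =
  \int[lebesgue_measure]_(u in `[0%R, 1%R[) (bb u - J (bb u) + c) := rep _ H3.
rewrite e1 e2 e3.
have fin01 : (lebesgue_measure (`[0%R, 1%R[ : set R) < +oo)%E.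
  by rewrite lebesgue_measure_itv /=; case: ifP => _; rewrite ?ltry.
have H2 : forall x1 x2, 0 <= x2 -> x2 <= x1 -> x1 <= M ->
    0 <= (fun x => x - J x) x1 - (fun x => x - J x) x2 <= x1 - x2.
  move=> x1 x2 a b e; have /andP[p q] := HJ x1 x2 a b e.
  by apply/andP; split; lra.
rewrite RintegralD; [|exact: measurable_itv| |]; last first.
- by apply: (@bnd_int _ _ `|c|) => //.
- apply: (@bnd_int _ _ (`|0 - J 0| + `|M - J M| )) => //.
    exact: (mpsib _ H2).
  move=> u; rewrite /= in_itv /= => uI.
  exact: (psib_bound _ H2 u uI).
rewrite RintegralB; [|exact: measurable_itv| |]; last first.
- apply: (@bnd_int _ _ (`|J 0| + `|J M| )) => //.
    exact: (mpsib _ HJ).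
  move=> u; rewrite /= in_itv /= => uI.
  exact: (psib_bound _ HJ u uI).
- apply: (@bnd_int _ _ (`|0| + `|M| )) => //.
    exact: (mpsib _ H1).
  move=> u; rewrite /= in_itv /= => uI.
  exact: (psib_bound _ H1 u uI).
rewrite Rintegral_cst; last exact: measurable_itv.
have -> : fine (lebesgue_measure (`[0%R, 1%R[ : set R)) = 1.
  by rewrite lebesgue_measure_itv /= lte01 /= subr0.
by rewrite mulr1.
Qed.

End Choq.

Theorem proposition2 (R : realType) (d : measure_display) (Om : measurableType d)
  (P : probability Om R) (X : Om -> R) (M : R) (T Is gs : R -> R) :
  nonatomic P ->
  measurable_fun setT X ->
  (forall w, 0 <= X w <= M) ->
  (forall x y, 0 <= x -> x < y -> y <= M ->
     fine (P [set w | X w <= x]) < fine (P [set w | X w <= y])) ->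
  distortion T ->
  stackelberg P X M T Is gs ->
  let pis := Pi P X gs Is in
  [/\ individually_rational P X T Is pis,
      pareto_optimal P X M T Is pis &
      rho_con P X T Is pis = rho_con P X T (fun _ => 0) 0].
Proof.
move=> _ mX X0M _ dT [dgs [ILs BRs] Vmax] pis.
have M0 : 0 <= M.
  have [[w _]|no] := pselect (exists w : Om, True).
    by have /andP[a b] := X0M w; apply: le_trans b.
  have e : [set: Om] = set0.
    by apply/seteqP; split => w // _; apply: no; exists w.
  have := probability_setT P; rewrite e measure0 => /(congr1 fine) /= /eqP.
  by rewrite eq_sym oner_eq0.
have [T01 Tmono T0 T1 _] := dT.
have [g01 gmono g0 g1 _] := dgs.
have AT J c := @addA R d Om P T T01 Tmono T0 T1 X M mX X0M M0 J c.
have Ag J c := @addA R d Om P gs g01 gmono g0 g1 X M mX X0M M0 J c.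
have IL0 : IL M (fun _ => 0).
  split => //; first by move=> x _; rewrite lexx M0.
  by move=> x1 x2 a b _; rewrite subrr lexx subr_ge0 b.
pose CX := choquet P T X.
have eX : (fun w => X w - (fun _ : R => 0) (X w) + 0) = X.
  by apply/funext => w; rewrite subr0 addr0.
have PT0 : Pi P X T (fun _ => 0) = 0.
  have := AT _ 0 IL0; rewrite eX.
  change (choquet P T X = choquet P T X - Pi P X T (fun _ => 0) + 0 ->
    Pi P X T (fun _ => 0) = 0); lra.
have Pg0 : Pi P X gs (fun _ => 0) = 0.
  have := Ag _ 0 IL0; rewrite eX.
  change (choquet P gs X = choquet P gs X - Pi P X gs (fun _ => 0) + 0 ->
    Pi P X gs (fun _ => 0) = 0); lra.
have rhoE J c : IL M J -> rho_con P X T J c = CX - Pi P X T J + c.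
  by move=> HJ; exact: AT J c HJ.
have rhomE J g : IL M J -> rho_mech P X T J g = CX - Pi P X T J + Pi P X g J.
  by move=> HJ; exact: rhoE.
have BRT J : IL M J -> is_best_response P X M T J T.
  move=> HJ; split; first exact: HJ.
  move=> J' HJ'; rewrite (rhomE J T HJ) (rhomE J' T HJ'); lra.
have VT J : IL M J -> V_mech P X J T <= V_mech P X Is gs.
  by move=> HJ; apply: Vmax; [exact: dT | exact: BRT].
have a1 : Pi P X gs Is <= Pi P X T Is.
  have := BRs _ IL0; rewrite (rhomE _ _ ILs) (rhomE _ _ IL0) PT0 Pg0; lra.
have a2 : Pi P X T Is <= Pi P X gs Is.
  by have := VT _ ILs; rewrite /V_mech; lra.
have e3 : rho_con P X T Is pis = rho_con P X T (fun _ => 0) 0.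
  by rewrite (rhoE _ _ ILs) (rhoE _ _ IL0) PT0 /pis; lra.
have V0 : V_con P X (fun _ => 0) 0 <= V_con P X Is pis.
  have := VT _ IL0; rewrite /V_mech /V_con PT0 /pis; lra.
split; [split; [rewrite e3; exact: lexx | exact: V0] | | exact: e3].
move=> [J [pj [HJ r1 v1 st]]].
have := VT _ HJ; move: r1 v1 st; rewrite /V_mech /V_con (rhoE _ _ HJ) (rhoE _ _ ILs) /pis.
move: e3; rewrite (rhoE _ _ ILs) (rhoE _ _ IL0) PT0 /pis => e3.
move=> r1 v1 [st|st] vt; lra.
Qed.
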